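(* In the setting described in the context, assume $f$ is strongly convex with respect to the norm $\|\cdot\|_{LP^{-1}}$ with convexity parameter $\mu>0$. Choose an initial point $x_0$, target accuracy $0<\epsilon<f(x_0)-f^*$, confidence $0<\rho<1$, and $$k\geq\frac1\mu\log\frac{f(x_0)-f^*}{\epsilon\rho}.$$ If $x_k$ is the random point generated by RCDS$(p,x_0)$ applied to $f$, then $\mathbf{P}(f(x_k)-f^*\leq\epsilon)\geq1-\rho$.
   Context: Let $U\in\mathbf{R}^{N\times N}$ be a column permutation of the $N\times N$ identity matrix, partitioned as $U=[U_1,\dots,U_n]$ with $U_i\in\mathbf{R}^{N\times N_i}$, $\sum_iN_i=N$; for $x\in\mathbf{R}^N$ write $x^{(i)}=U_i^Tx$. Each $\mathbf{R}^{N_i}$ carries an arbitrary norm $\|\cdot\|_{(i)}$ with dual norm $\|s\|_{(i)}^*=\max_{\|t\|_{(i)}=1}\langle s,t\rangle$. Let $f:\mathbf{R}^N\to\mathbf{R}$ be convex and differentiable with $\|\nabla_if(x+U_it)-\nabla_if(x)\|_{(i)}^*\leq L_i\|t\|_{(i)}$ for all $x,t,i$, where $L_i>0$ and $\nabla_if(x)=U_i^T\nabla f(x)$; $f$ attains its minimum $f^*$. Let $p$ be a probability vector with all $p_i>0$, $L=\mathrm{Diag}(L_i)$, $P=\mathrm{Diag}(p_i)$, and $\|x\|_{LP^{-1}}=(\sum_i\frac{L_i}{p_i}\|x^{(i)}\|_{(i)}^2)^{1/2}$. Strong convexity w.r.t. $\|\cdot\|_{LP^{-1}}$ with parameter $\mu$: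 $f(x)\geq f(y)+\langle\nabla f(y),x-y\rangle+\frac\mu2\|x-y\|_{LP^{-1}}^2$ for all $x,y$. For $s\in\mathbf{R}^{N_i}$, $s^\#$ denotes an optimal solution of $\min_{t}\{-\langle s,t\rangle+\frac12\|t\|_{(i)}^2\}$. Algorithm RCDS$(p,x_0)$: for $k=0,1,2,\dots$, choose $i$ with probability $p_i$ (independently) and set $x_{k+1}=x_k-\frac1{L_i}U_i(\nabla_if(x_k))^\#$. *)

(* Defs.v *)
From mathcomp Require Import all_boot all_order all_algebra.
From mathcomp Require Import all_classical all_reals all_analysis.
Set Implicit Arguments. Unset Strict Implicit. Unset Printing Implicit Defensive.
Import Order.TTheory GRing.Theory Num.Theory.
Local Open Scope ring_scope.
Local Open Scope classical_set_scope.

Section RCDS.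
Variable R : realType.

Definition inprod m (s t : 'cV[R]_m) : R := (s^T *m t) 0 0.

Definition is_norm m (nrm : 'cV[R]_m -> R) : Prop :=
  (forall t, 0 <= nrm t) /\
  (forall t, nrm t = 0 -> t = 0) /\
  (forall (a : R) t, nrm (a *: t) = `|a| * nrm t) /\
  (forall s t, nrm (s + t) <= nrm s + nrm t).

Definition dual_norm m (nrm : 'cV[R]_m -> R) (s : 'cV[R]_m) : R :=
  sup [set inprod s t | t in [set t | nrm t = 1]].

Definition grad N (f : 'cV[R]_N -> R) (x : 'cV[R]_N) : 'cV[R]_N :=
  \col_j derive f x (delta_mx j 0 : 'cV[R]_N).

Definition convex_fun N (f : 'cV[R]_N -> R) : Prop :=
  forall (x y : 'cV[R]_N) (t : R), 0 <= t <= 1 ->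
    f (t *: x + (1 - t) *: y) <= t * f x + (1 - t) * f y.

Variables (n : nat) (Ns : 'I_n -> nat).
Local Notation N := (\sum_(i < n) Ns i)%N.

Definition Ublk (U : 'M[R]_N) (i : 'I_n) : 'M[R]_(N, Ns i) := submxrow U i.

Definition blk (U : 'M[R]_N) (i : 'I_n) (x : 'cV[R]_N) : 'cV[R]_(Ns i) :=
  (Ublk U i)^T *m x.

Definition grad_blk (U : 'M[R]_N) (f : 'cV[R]_N -> R) (i : 'I_n) (x : 'cV[R]_N)
  : 'cV[R]_(Ns i) := (Ublk U i)^T *m grad f x.

Definition norm_LPinv (U : 'M[R]_N) (nrm : forall i, 'cV[R]_(Ns i) -> R)
  (L p : 'I_n -> R) (x : 'cV[R]_N) : R :=
  Num.sqrt (\sum_(i < n) L i / p i * (nrm i (blk U i x)) ^+ 2).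

Definition is_sharp m (nrm : 'cV[R]_m -> R) (s ts : 'cV[R]_m) : Prop :=
  forall t, - inprod s ts + 2^-1 * (nrm ts) ^+ 2 <= - inprod s t + 2^-1 * (nrm t) ^+ 2.

(* one step of RCDS with chosen block i; sharp is the selection s |-> s^# *)
Definition rcds_step (U : 'M[R]_N) (f : 'cV[R]_N -> R)
  (sharp : forall i, 'cV[R]_(Ns i) -> 'cV[R]_(Ns i)) (L : 'I_n -> R)
  (x : 'cV[R]_N) (i : 'I_n) : 'cV[R]_N :=
  x - (L i)^-1 *: (Ublk U i *m sharp i (grad_blk U f i x)).

(* x_k as a function of the chosen indices i_0, ..., i_{k-1} *)
Definition rcds_iter (U : 'M[R]_N) (f : 'cV[R]_N -> R)
  (sharp : forall i, 'cV[R]_(Ns i) -> 'cV[R]_(Ns i)) (L : 'I_n -> R)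
  (x0 : 'cV[R]_N) (s : seq 'I_n) : 'cV[R]_N :=
  foldl (rcds_step U f sharp L) x0 s.

(* P(f(x_k) - f^* <= eps) when the indices are i.i.d. with law p *)
Definition rcds_prob (U : 'M[R]_N) (f : 'cV[R]_N -> R)
  (sharp : forall i, 'cV[R]_(Ns i) -> 'cV[R]_(Ns i)) (L p : 'I_n -> R)
  (x0 : 'cV[R]_N) (k : nat) (fstar eps : R) : R :=
  \sum_(s : k.-tuple 'I_n | f (rcds_iter U f sharp L x0 s) - fstar <= eps)
     \prod_(i <- s) p i.

End RCDS.

(* Main.v *)
Require Import Defs.
From mathcomp Require Import all_boot all_order all_algebra.
From mathcomp Require Import all_classical all_reals all_analysis.
From mathcomp Require Import ring lra.
From mathcomp Require Import fingroup perm.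
Import Order.TTheory GRing.Theory Num.Theory numFieldNormedType.Exports.
Local Open Scope ring_scope.
Local Open Scope classical_set_scope.
Set Implicit Arguments. Unset Strict Implicit. Unset Printing Implicit Defensive.
Section A.
Variable R : realType.

Lemma nrm0 m (nrm : 'cV[R]_m -> R) : is_norm nrm -> nrm 0 = 0.
Proof.
move=> [_ [_ [Hz _]]]; by rewrite -(scale0r 0) Hz normr0 mul0r.
Qed.

Lemma nrm_sum m (nrm : 'cV[R]_m -> R) k (F : 'I_k -> 'cV[R]_m) : is_norm nrm ->
  nrm (\sum_(i < k) F i) <= \sum_(i < k) nrm (F i).
Proof.
move=> H; elim/big_rec2: _ => [|i y1 y2 _ Hy]; first by rewrite nrm0.
case: H => _ [_ [_ Ht]].
by apply: le_trans (Ht _ _) _; rewrite lerD2l.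
Qed.

Lemma mx_entry_le m n (r : 'M[R]_(m, n)) i j : `|r i j| <= `|r|.
Proof.
have /mapP[k Hk ->] : `|r i j| \in [seq `|r x.1 x.2| | x : 'I_m * 'I_n].
  by apply/mapP; exists (i, j) => //=; rewrite mem_enum.
by rewrite [leRHS]/Num.Def.normr /= mx_normrE; apply/bigmax_geP; right => /=; exists k.
Qed.

Lemma coord_bound m (nrm : 'cV[R]_m -> R) : is_norm nrm ->
  exists C : R, forall v, nrm v = 1 -> forall j, `|v j 0| <= C.
Proof.
case: m nrm => [|m] nrm H.
  by exists 0 => v _ [].
have H' := H; case: H' => Hpos [Hdef [Hhom Htri]].
pose g (r : 'rV[R]_m.+1) := nrm r^T.
pose K := \sum_(j < m.+1) nrm (delta_mx j 0).
have gle r : g r <= K * `|r|.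
  rewrite /g {1}[r^T]matrix_sum_delta.
  have X := nrm_sum (fun i => \sum_(j < 1) r^T i j *: delta_mx i j) H. apply: (le_trans X).
  rewrite /K mulr_suml; apply: ler_sum => j _.
  rewrite big_ord1 Hhom mulrC ler_wpM2l //.
  by rewrite mxE; apply: mx_entry_le.
have gN r : g (- r) = g r.
  by rewrite /g linearN /= -scaleN1r Hhom normrN normr1 mul1r.
have gtri r s : g (r + s) <= g r + g s by rewrite /g linearD; apply: Htri.
have gcont : continuous g.
  move=> x; have FF : Filter (nbhs x) by apply: nbhs_filter.
  apply/cvgrPdist_lt => e e0.
  have K0 : 0 < K + 1.
    by rewrite ltr_pwDr // sumr_ge0.
  near=> y.
  have : `|g x - g y| <= K * `|x - y|.
    have h1 : g y <= g x + K * `|x - y|.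
      have := gtri (y - x) x; rewrite subrK => h; apply: le_trans h _.
      by rewrite addrC lerD2l -gN opprB; apply: gle.
    have h2 : g x <= g y + K * `|x - y|.
      have := gtri (x - y) y; rewrite subrK => h; apply: le_trans h _.
      by rewrite addrC lerD2l; apply: gle.
    rewrite ler_norml; apply/andP; split; lra.
  move/le_lt_trans; apply.
  have : `|x - y| < e / (K + 1).
    near: y; apply: (@cvgr_dist_lt _ _ _ _ FF id x) => //.
    by rewrite divr_gt0.
  move=> h; apply: (@le_lt_trans _ _ ((K + 1) * `|x - y|)).
    by rewrite ler_wpM2r // lerDl.
  by rewrite mulrC -ltr_pdivlMr.
pose A := [set r : 'rV[R]_m.+1 | `|r| = 1].
have unitA r : r != 0 -> A (`|r|^-1 *: r).
  move=> r0; rewrite /A /= normrZ normrV ?unitfE ?normr_eq0 //.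
  by rewrite normr_id mulVf // normr_eq0.
have A0 : A !=set0.
  exists (`|const_mx 1 : 'rV[R]_m.+1|^-1 *: const_mx 1); apply: unitA.
  by apply/negP => /eqP /matrixP /(_ 0 0); rewrite !mxE => /eqP; rewrite oner_eq0.
have cA : compact A.
  apply: bounded_closed_compact.
    exists 1; split; first by rewrite real1.
    by move=> M /= M1 r Ar; rewrite Ar ltW.
  rewrite (_ : A = (@Num.Def.normr _ _) @^-1` [set 1]) //.
  apply: preimage_closed; last exact: closed_eq.
  by move=> r _; apply: norm_continuous.
have [c cA' cmin] := EVT_min_rV A0 cA (continuous_subspaceT gcont).
have Ac : A c by move: cA'; rewrite in_setE.
have gc0 : 0 < g c.
  rewrite lt_def Hpos andbT; apply/negP => /eqP /Hdef /(congr1 trmx).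
  rewrite trmxK trmx0 => c0; move: Ac; rewrite /A /= c0 normr0 => /esym/eqP.
  by rewrite oner_eq0.
exists (g c)^-1 => v nv j.
have v0 : v^T != 0.
  apply/negP => /eqP/(congr1 trmx); rewrite trmxK trmx0 => v0.
  by move: nv; rewrite v0 nrm0 // => /esym/eqP; rewrite oner_eq0.
have := cmin _ (mem_set (unitA _ v0)).
rewrite /g linearZ /= trmxK Hhom nv mulr1 normrV ?unitfE ?normr_eq0 // normr_id.
have nvT : 0 < `|v^T| by rewrite normr_gt0.
move=> h; apply: le_trans (_ : `|v^T| <= _).
  have -> : v j 0 = v^T 0 j by rewrite mxE.
  by apply: mx_entry_le.
by rewrite -(invrK `|v^T|) lef_pV2 ?posrE ?invr_gt0.
Unshelve. all: by end_near. Qed.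

Lemma inprodE m (s t : 'cV[R]_m) : inprod s t = \sum_j s j 0 * t j 0.
Proof. by rewrite /inprod mxE; apply: eq_bigr => j _; rewrite mxE. Qed.

Lemma inprod_le_dual m (nrm : 'cV[R]_m -> R) s t : is_norm nrm ->
  inprod s t <= dual_norm nrm s * nrm t.
Proof.
move=> H; have H' := H; case: H' => Hpos [Hdef [Hhom Htri]].
have [->|t0] := eqVneq t 0.
  by rewrite inprodE big1 ?nrm0 ?mulr0 // => j _; rewrite mxE mulr0.
have nt0 : 0 < nrm t.
  by rewrite lt_def Hpos andbT; apply/negP => /eqP /Hdef; apply/eqP.
pose u := (nrm t)^-1 *: t.
have nu : nrm u = 1 by rewrite Hhom normrV ?unitfE ?gt_eqF // gtr0_norm // mulVf ?gt_eqF.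
have -> : inprod s t = nrm t * inprod s u.
  rewrite !inprodE mulr_sumr; apply: eq_bigr => j _.
  rewrite mxE mulrCA; congr (_ * _).
  by rewrite mulrA mulfV ?gt_eqF // mul1r.
rewrite mulrC ler_wpM2r ?Hpos //.
have [C HC] := coord_bound H.
apply: sup_upper_bound; last by exists u.
split; first by exists (inprod s u); exists u.
exists (\sum_j `|s j 0| * C) => _ [v /= nv <-].
rewrite inprodE; apply: ler_sum => j _.
apply: le_trans (ler_norm _) _; rewrite normrM ler_wpM2l //.
exact: HC.
Qed.

Lemma derive_grad N (f : 'cV[R]_N -> R) y w : differentiable f y ->
  derive f y w = inprod (grad f y) w.
Proof.
move=> df; rewrite deriveE // {1}[w]matrix_sum_delta linear_sum inprodE.
apply: eq_bigr => i _; rewrite big_ord1 linearZ /= mxE deriveE //.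
by rewrite mulrC.
Qed.

Lemma is_derive_line N (f : 'cV[R]_N -> R) x w (t : R) :
  differentiable f (x + t *: w) ->
  is_derive t 1 (fun s => f (x + s *: w)) (derive f (x + t *: w) w).
Proof.
move=> df.
have E : (fun h : R => h^-1 *: (((fun s => f (x + s *: w)) \o shift t) (h *: 1)
            - f (x + t *: w))) =
         (fun h => h^-1 *: ((f \o shift (x + t *: w)) (h *: w) - f (x + t *: w))).
  apply: funext => h /=; congr (_ *: (f _ - _)).
  by rewrite [h%:A]mulr1 scalerDl addrCA addrA.
split; first by rewrite /derivable E; apply: diff_derivable.
by rewrite /derive E.
Qed.

Lemma inprodBl m (s s' t : 'cV[R]_m) : inprod s t - inprod s' t = inprod (s - s') t.
Proof.
rewrite !inprodE -sumrB; apply: eq_bigr => j _; by rewrite !mxE mulrBl.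
Qed.

Lemma inprod_mul N m (g : 'cV[R]_N) (V : 'M[R]_(N, m)) t :
  inprod g (V *m t) = inprod (V^T *m g) t.
Proof. by rewrite /inprod trmx_mul trmxK mulmxA. Qed.

Lemma descent N (f : 'cV[R]_N -> R) m (nrm : 'cV[R]_m -> R) (V : 'M[R]_(N, m))
  (Lc : R) x (t : 'cV[R]_m) :
  is_norm nrm -> (forall x, differentiable f x) -> 0 <= Lc ->
  (forall x t, dual_norm nrm (V^T *m grad f (x + V *m t) - V^T *m grad f x)
                 <= Lc * nrm t) ->
  f (x + V *m t) <= f x + inprod (V^T *m grad f x) t + Lc / 2 * nrm t ^+ 2.
Proof.
move=> Hn df L0 HL.
have Hn' := Hn; case: Hn' => Hpos [Hdef [Hhom Htri]].
pose w := V *m t.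
pose c0 := inprod (V^T *m grad f x) t.
pose K := Lc * nrm t ^+ 2.
pose F := fun s : R => f (x + s *: w).
pose p : {poly R} := c0 *: 'X + (K / 2) *: 'X^2.
have hd : forall s : R, is_derive s (1 : R) (F - horner p : R -> R)
    (derive f (x + s *: w) w - p^`().[s]).
  move=> s; apply: is_deriveB; exact: is_derive_line.
have hcont : {within `[0, 1], continuous (F - horner p)}.
  apply: derivable_within_continuous => s' _.
  by case: (hd s').
have [c c01 Hc] := MVT_segment ler01 (fun s _ => hd s) hcont.
move: c01; rewrite in_itv /= => /andP [c0' c1].
have dle : derive f (x + c *: w) w - c0 <= K * c.
  rewrite !derive_grad // /w inprod_mul /c0 inprodBl.
  apply: le_trans (inprod_le_dual _ _ Hn) _.
  have -> : x + c *: (V *m t) = x + V *m (c *: t) by rewrite scalemxAr.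
  apply: le_trans (ler_wpM2r (Hpos _) (HL _ _)) _.
  by rewrite Hhom ger0_norm // /K le_eqVlt; apply/orP; left; apply/eqP; ring.
have dp : p^`().[c] = c0 + K * c.
  by rewrite /p derivD !derivZ derivX derivXn !hornerE /=; field.
have p1 : p.[1] = c0 + K / 2 by rewrite /p !hornerE /=; ring.
have p0 : p.[0] = 0 by rewrite /p !hornerE /=; ring.
move: Hc.
have -> : (F - horner p) 1 - (F - horner p) 0 = F 1 - p.[1] - (F 0 - p.[0]) by [].
rewrite dp p1 p0 /F scale1r scale0r addr0 !subr0 mulr1 => Hc.
move: Hc dle; rewrite /K /c0.
set D := derive _ _ _; move=> Hc dle.
have -> : f (x + V *m t) = f (x + w) by [].
nra.
Qed.

Lemma perm_UUT N (U : 'M[R]_N) : is_perm_mx U -> U *m U^T = 1%:M.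
Proof.
case/is_perm_mxP => s ->; rewrite tr_perm_mx -perm_mxM.
have -> : (s * s^-1)%g = 1%g by apply: mulgV.
exact: perm_mx1.
Qed.

Lemma blk_decomp n (Ns : 'I_n -> nat) (U : 'M[R]_(\sum_(i < n) Ns i)) g d :
  is_perm_mx U ->
  inprod g d = \sum_i inprod ((Ublk U i)^T *m g) ((Ublk U i)^T *m d).
Proof.
move=> HU; have -> : inprod g d = ((g^T *m U) *m (U^T *m d)) 0 0.
  by rewrite /inprod mulmxA -(mulmxA _ U) perm_UUT // mulmx1.
rewrite -[g^T *m U]submxrowK -[U^T *m d]submxcolK mul_mxrow_mxcol summxE.
apply: eq_bigr => i _; rewrite /inprod /Ublk trmx_mul trmxK mul_submxrow.
by rewrite tr_submxrow submxcol_mul.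
Qed.

Lemma inprodZr m (s t : 'cV[R]_m) a : inprod s (a *: t) = a * inprod s t.
Proof. by rewrite /inprod -scalemxAr mxE. Qed.

Lemma sharp_bound m (nrm : 'cV[R]_m -> R) s ts d c :
  is_norm nrm -> is_sharp nrm s ts -> 0 < c ->
  (- inprod s ts + 2^-1 * nrm ts ^+ 2) / c <= inprod s d + c / 2 * nrm d ^+ 2.
Proof.
move=> [_ [_ [Hhom _]]] Hs c0.
rewrite ler_pdivrMr //; apply: le_trans (Hs (- c *: d)) _.
rewrite inprodZr Hhom normrN gtr0_norm //.
rewrite le_eqVlt; apply/orP; left; apply/eqP; by field.
Qed.

Lemma sc_bound n (Ns : 'I_n -> nat) (U : 'M[R]_(\sum_(i < n) Ns i))
  (nrm : forall i : 'I_n, 'cV[R]_(Ns i) -> R)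
  (f : 'cV[R]_(\sum_(i < n) Ns i) -> R) (L p : 'I_n -> R)
  (sharp : forall i : 'I_n, 'cV[R]_(Ns i) -> 'cV[R]_(Ns i))
  (fstar mu : R) xs x :
  is_perm_mx U -> (forall i, is_norm (nrm i)) ->
  (forall i, 0 < L i) -> (forall i, 0 < p i) ->
  (forall i s, is_sharp (nrm i) s (sharp i s)) -> 0 < mu ->
  (forall x y, f x >= f y + inprod (grad f y) (x - y)
                 + mu / 2 * (norm_LPinv U nrm L p (x - y)) ^+ 2) ->
  f xs = fstar ->
  \sum_i p i / L i * (- inprod (grad_blk U f i x) (sharp i (grad_blk U f i x))
      + 2^-1 * nrm i (sharp i (grad_blk U f i x)) ^+ 2) <= mu * (fstar - f x).
Proof.
move=> HU Hn HL Hp Hs mu0 SC <-.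
have H := SC xs x.
rewrite (blk_decomp _ _ HU) /norm_LPinv sqr_sqrtr in H; last first.
  by apply: sumr_ge0 => i _; apply: mulr_ge0; [apply: divr_ge0; apply: ltW | apply: sqr_ge0].
set S1 := \sum_i _ in H; set S2 := \sum_i _ in H.
have key : \sum_i p i / L i * (- inprod (grad_blk U f i x) (sharp i (grad_blk U f i x))
      + 2^-1 * nrm i (sharp i (grad_blk U f i x)) ^+ 2) <= mu * (S1 + mu / 2 * S2).
  rewrite /S1 /S2 mulr_sumr -big_split /= mulr_sumr; apply: ler_sum => i _.
  have c0 : 0 < mu * L i / p i by rewrite divr_gt0 ?mulr_gt0.
  have h := sharp_bound (blk U i (xs - x)) (Hn i) (Hs i (grad_blk U f i x)) c0.
  set M := (- inprod _ _ + _) in h *.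
  have -> : p i / L i * M = mu * (M / (mu * L i / p i)).
    by field; rewrite !gt_eqF.
  rewrite ler_pM2l //; apply: le_trans h _.
  rewrite le_eqVlt; apply/orP; left; apply/eqP; rewrite /blk /grad_blk; field.
  by rewrite gt_eqF.
apply: le_trans key _; rewrite ler_pM2l //; lra.
Qed.

Lemma step_bound n (Ns : 'I_n -> nat) (U : 'M[R]_(\sum_(i < n) Ns i))
  (nrm : forall i : 'I_n, 'cV[R]_(Ns i) -> R)
  (f : 'cV[R]_(\sum_(i < n) Ns i) -> R) (L : 'I_n -> R)
  (sharp : forall i : 'I_n, 'cV[R]_(Ns i) -> 'cV[R]_(Ns i)) x i :
  (forall i, is_norm (nrm i)) -> (forall x, differentiable f x) ->
  (forall i, 0 < L i) ->
  (forall x i (t : 'cV[R]_(Ns i)),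
     dual_norm (nrm i) (grad_blk U f i (x + Ublk U i *m t) - grad_blk U f i x)
       <= L i * nrm i t) ->
  f (rcds_step U f sharp L x i) <= f x + (L i)^-1 *
     (- inprod (grad_blk U f i x) (sharp i (grad_blk U f i x))
      + 2^-1 * nrm i (sharp i (grad_blk U f i x)) ^+ 2).
Proof.
move=> Hn df HL HLip.
have -> : rcds_step U f sharp L x i =
   x + Ublk U i *m (- (L i)^-1 *: sharp i (grad_blk U f i x)).
  by rewrite /rcds_step -scalemxAr scaleNr.
apply: le_trans (descent _ _ (Hn i) df (ltW (HL i)) (HLip ^~ i)) _.
have Hn' := Hn i; case: Hn' => _ [_ [Hhom _]].
rewrite inprodZr Hhom normrN gtr0_norm ?invr_gt0 //.
rewrite le_eqVlt; apply/orP; left; apply/eqP; rewrite /grad_blk; field.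
by rewrite gt_eqF.
Qed.

Lemma big_tuple_cons (I : finType) k (F : seq I -> R) :
  \sum_(s : k.+1.-tuple I) F s = \sum_(i : I) \sum_(s : k.-tuple I) F (i :: s).
Proof.
rewrite pair_big /=.
rewrite (reindex (fun ps : I * k.-tuple I => [tuple of ps.1 :: ps.2])) //=.
apply: onW_bij.
exists (fun t : k.+1.-tuple I => (thead t, [tuple of behead t])).
  by move=> [i s] /=; rewrite theadE; congr pair; apply: val_inj.
by move=> t /=; rewrite -tuple_eta.
Qed.

Lemma big_tuple0 (I : finType) (F : seq I -> R) :
  \sum_(s : 0.-tuple I) F s = F [::].
Proof.
rewrite (eq_bigr (fun _ => F [::])); last by move=> s _; rewrite tuple0.
by rewrite sumr_const card_tuple expn0.
Qed.
End A.

Theorem theorem12 (R : realType) (n : nat) (Ns : 'I_n -> nat)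
  (U : 'M[R]_(\sum_(i < n) Ns i))
  (nrm : forall i : 'I_n, 'cV[R]_(Ns i) -> R)
  (f : 'cV[R]_(\sum_(i < n) Ns i) -> R) (L p : 'I_n -> R)
  (sharp : forall i : 'I_n, 'cV[R]_(Ns i) -> 'cV[R]_(Ns i))
  (fstar mu : R) (x0 : 'cV[R]_(\sum_(i < n) Ns i)) (eps rho : R) (k : nat) :
  is_perm_mx U ->
  (forall i, is_norm (nrm i)) ->
  convex_fun f ->
  (forall x, differentiable f x) ->
  (forall i, 0 < L i) ->
  (forall x i (t : 'cV[R]_(Ns i)),
     dual_norm (nrm i) (grad_blk U f i (x + Ublk U i *m t) - grad_blk U f i x)
       <= L i * nrm i t) ->
  (exists xs, f xs = fstar) -> (forall x, fstar <= f x) ->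
  (forall i, 0 < p i) -> \sum_(i < n) p i = 1 ->
  (forall i s, is_sharp (nrm i) s (sharp i s)) ->
  0 < mu ->
  (forall x y, f x >= f y + inprod (grad f y) (x - y)
                 + mu / 2 * (norm_LPinv U nrm L p (x - y)) ^+ 2) ->
  0 < eps -> eps < f x0 - fstar ->
  0 < rho < 1 ->
  k%:R >= mu^-1 * ln ((f x0 - fstar) / (eps * rho)) ->
  rcds_prob U f sharp L p x0 k fstar eps >= 1 - rho.
Proof.
move=> HU Hn _ df HL HLip [xs fxs] fmin Hp Hp1 Hs mu0 SC eps0 epsx /andP [rho0 rho1] Hk.
pose step := rcds_step U f sharp L.
have Hstep : forall x, \sum_i p i * (f (step x i) - fstar) <= (1 - mu) * (f x - fstar).
  move=> x.
  have sc := sc_bound x HU Hn HL Hp Hs mu0 SC fxs.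
  apply: (@le_trans _ _ (\sum_i p i * (f x - fstar) + \sum_i p i / L i *
     (- inprod (grad_blk U f i x) (sharp i (grad_blk U f i x))
      + 2^-1 * nrm i (sharp i (grad_blk U f i x)) ^+ 2))).
    rewrite -big_split /=; apply: ler_sum => i _.
    rewrite -mulrA -mulrDr; apply: ler_wpM2l; first exact: ltW.
    have := step_bound sharp x i Hn df HL HLip; rewrite /step; lra.
  rewrite -mulr_suml Hp1 mul1r; lra.
have mu1 : 0 <= 1 - mu.
  have h1 := Hstep x0.
  have h2 : 0 <= \sum_i p i * (f (step x0 i) - fstar).
    apply: sumr_ge0 => i _; apply: mulr_ge0; first exact: ltW.
    by rewrite subr_ge0.
  have h3 := le_trans h2 h1.
  rewrite pmulr_lge0 in h3 => //; lra.
pose w (s : seq 'I_n) := \prod_(i <- s) p i.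
have wp : forall s, 0 < w s by move=> s; apply: prodr_gt0 => i _; exact: Hp.
have w0 : forall s, 0 <= w s by move=> s; apply: prodr_ge0 => i _; apply: ltW.
have Hmass : forall k, \sum_(s : k.-tuple 'I_n) w s = 1.
  elim=> [|j IH]; first by rewrite big_tuple0 /w big_nil.
  rewrite big_tuple_cons -[RHS]Hp1; apply: eq_bigr => i _.
  by rewrite /w; under eq_bigr do rewrite big_cons; rewrite -mulr_sumr IH mulr1.
have HE : forall k x, \sum_(s : k.-tuple 'I_n)
    w s * (f (rcds_iter U f sharp L x s) - fstar) <= (1 - mu) ^+ k * (f x - fstar).
  elim=> [|j IH] x.
    rewrite (big_tuple0 (fun s => w s * (f (rcds_iter U f sharp L x s) - fstar))).
    by rewrite /w big_nil mul1r /=.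
  rewrite (big_tuple_cons j (fun s => w s * (f (rcds_iter U f sharp L x s) - fstar))).
  apply: (@le_trans _ _ (\sum_i p i * ((1 - mu) ^+ j * (f (step x i) - fstar)))).
    apply: ler_sum => i _.
    under eq_bigr do rewrite /w big_cons -mulrA.
    rewrite -mulr_sumr; apply: ler_wpM2l; first exact: ltW.
    exact: IH.
  under eq_bigr do rewrite mulrCA.
  rewrite -mulr_sumr exprSr -mulrA ler_wpM2l ?exprn_ge0 //.
set D := f x0 - fstar.
have D0 : 0 < D by rewrite /D; lra.
have Hq : (1 - mu) ^+ k * D / eps <= rho.
  have a0 : 0 < D / (eps * rho) by rewrite divr_gt0 ?mulr_gt0.
  have e1 : (1 - mu) ^+ k <= expR (k%:R * - mu).
    rewrite expRM_natl; apply: lerXn2r; rewrite ?inE ?nnegrE ?expR_ge0 //.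
    by have := expR_ge1Dx (- mu).
  have e2 : expR (k%:R * - mu) <= (D / (eps * rho))^-1.
    rewrite -[X in _ <= X^-1](lnK a0) -expRN ler_expR.
    rewrite -(ler_pM2l mu0) mulrA mulfV ?gt_eqF // mul1r in Hk.
    lra.
  have := le_trans e1 e2; rewrite invf_div => h.
  rewrite ler_pdivrMr //; apply: le_trans (ler_wpM2r (ltW D0) h) _.
  rewrite le_eqVlt; apply/orP; left; apply/eqP; field.
  by rewrite !gt_eqF.
rewrite /rcds_prob -/w.
set P := fun s : k.-tuple 'I_n => f (rcds_iter U f sharp L x0 s) - fstar <= eps.
have split1 := bigID P predT w.
have Hnot : \sum_(s : k.-tuple 'I_n | ~~ P s) w s <= rho.
  apply: le_trans Hq.
  apply: (@le_trans _ _ (\sum_(s : k.-tuple 'I_n | ~~ P s)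
      w s * (f (rcds_iter U f sharp L x0 s) - fstar) / eps)).
    apply: ler_sum => s Ps; rewrite -mulrA ler_pMr ?ler_pdivlMr ?wp //.
    rewrite mul1r; move: Ps; rewrite /P; lra.
  have -> : \sum_(s : k.-tuple 'I_n | ~~ P s)
      w s * (f (rcds_iter U f sharp L x0 s) - fstar) / eps =
      (\sum_(s : k.-tuple 'I_n | ~~ P s)
      w s * (f (rcds_iter U f sharp L x0 s) - fstar)) / eps by rewrite mulr_suml.
  rewrite ler_pM2r ?invr_gt0 //.
  apply: le_trans (HE k x0).
  rewrite [X in _ <= X](bigID P) /= lerDr.
  apply: sumr_ge0 => s _; apply: mulr_ge0 => //; rewrite subr_ge0; exact: fmin.
have := Hmass k; rewrite split1 /=.
move: Hnot; lra.
Qed.
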